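(* Identify $E$ with its image under global coordinates. Then: (i) the set of $\mathrm{Spin}(2)$ representation classes in $E$ is exactly $E_2$; (ii) the set of $\mathrm{Pin}(2)$ representation classes in $E$ is $E_2$ together with the points of $E$ lying on the three coordinate axes of $\mathbb{R}^3$; (iii) for each $-2<k<2$, exactly six points of $E_k$ are $\mathrm{Pin}(2)$ representation classes.
   Context: $M$ is a torus with one boundary component; $\pi_1(M)$ is free on $X,Y$, and $K=XYX^{-1}Y^{-1}$. $E=\operatorname{Hom}(\pi_1(M),\mathrm{SU}(2))/\mathrm{SU}(2)$ is identified via $[\sigma]\mapsto(\operatorname{tr}\sigma(X),\operatorname{tr}\sigma(Y),\operatorname{tr}\sigma(XY))$ with $\{(x,y,z)\in[-2,2]^3:-2\le x^2+y^2+z^2-xyz-2\le2\}$, and $E_k=\{(x,y,z)\in E: x^2+y^2+z^2-xyz-2=k\}$ (note $\operatorname{tr}\sigma(K)=x^2+y^2+z^2-xyz-2$). In the quaternionic model ($1,\mathrm{i},\mathrm{j},\mathrm{k}$ = the matrices $\begin{pmatrix}1&0\\0&1\end{pmatrix},\begin{pmatrix}i&0\\0&-i\end{pmatrix},\begin{pmatrix}0&1\\-1&0\end{pmatrix},\begin{pmatrix}0&i\\i&0\end{pmatrix}$), $\mathrm{Spin}(2)=\{\cos\theta+\sin\theta\,\mathrm{j}\}$, $\mathrm{Spin}_-(2)=\{\cos\theta\,\mathrm{k}+\sin\theta\,\mathrm{i}\}$, $\mathrm{Pin}(2)=\mathrm{Spin}(2)\cup\mathrm{Spin}_-(2)$.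 For a subgroup $G\subset\mathrm{SU}(2)$, a point $[\sigma]\in E$ is a $G$ representation class if some representative takes values in $G$. *)

(* Defs.v *)
From Stdlib Require Import Reals List.
Open Scope R_scope.

(* Quaternionic model of SU(2): the quaternion a + b i + c j + d k is the
   2x2 complex matrix [[a + b*I, c + d*I], [-c + d*I, a - b*I]], with
   1,i,j,k the matrices given in the paper.  Matrix product = Hamilton
   product, and the matrix trace is 2a. *)
Record quat := Quat { qa : R; qb : R; qc : R; qd : R }.

Definition qmul (p q : quat) : quat :=
  Quat (qa p * qa q - qb p * qb q - qc p * qc q - qd p * qd q)
       (qa p * qb q + qb p * qa q + qc p * qd q - qd p * qc q)
       (qa p * qc q - qb p * qd q + qc p * qa q + qd p * qb q)
       (qa p * qd q + qb p * qc q - qc p * qb q + qd p * qa q).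

Definition qtr (q : quat) : R := 2 * qa q.

(* SU(2) = unit quaternions (determinant of the matrix = a^2+b^2+c^2+d^2) *)
Definition SU2 (q : quat) : Prop :=
  qa q ^ 2 + qb q ^ 2 + qc q ^ 2 + qd q ^ 2 = 1.

Definition Spin2 (q : quat) : Prop :=
  exists t : R, q = Quat (cos t) 0 (sin t) 0.
Definition Spin2m (q : quat) : Prop :=
  exists t : R, q = Quat 0 (sin t) 0 (cos t).
Definition Pin2 (q : quat) : Prop := Spin2 q \/ Spin2m q.

Definition pt := (R * R * R)%type.

(* tr sigma(K) in global coordinates *)
Definition kappa (p : pt) : R :=
  let '(x, y, z) := p in x ^ 2 + y ^ 2 + z ^ 2 - x * y * z - 2.

Definition E (p : pt) : Prop :=
  let '(x, y, z) := p in
  -2 <= x <= 2 /\ -2 <= y <= 2 /\ -2 <= z <= 2 /\ -2 <= kappa p <= 2.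

Definition Ek (k : R) (p : pt) : Prop := E p /\ kappa p = k.

(* A representation sigma of the free group on X, Y is the pair
   (sigma X, sigma Y) in SU(2)^2.  The point p (in coordinates) is a
   G representation class iff some representative of the class takes
   values in G, i.e. p = (tr a, tr b, tr ab) for some a, b in G. *)
Definition GRepClass (G : quat -> Prop) (p : pt) : Prop :=
  exists a b : quat, SU2 a /\ SU2 b /\ G a /\ G b /\
    p = (qtr a, qtr b, qtr (qmul a b)).

Definition on_axis (p : pt) : Prop :=
  let '(x, y, z) := p in
  (y = 0 /\ z = 0) \/ (x = 0 /\ z = 0) \/ (x = 0 /\ y = 0).

(* Main.v *)
Require Import Defs.
From Stdlib Require Import Reals List.
From Stdlib Require Import Lra Psatz.
Open Scope R_scope.

Lemma triple_eq (a b c a' b' c' : R) : a = a' -> b = b' -> c = c' -> ((a, b, c) : pt) = (a', b', c').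
Proof. intros -> -> ->; reflexivity. Qed.

Lemma cos_b (s : R) : -2 <= 2 * cos s <= 2.
Proof. pose proof (COS_bound s); lra. Qed.

Lemma spin_fwd (s t : R) :
  let p := (qtr (Quat (cos s) 0 (sin s) 0), qtr (Quat (cos t) 0 (sin t) 0),
            qtr (qmul (Quat (cos s) 0 (sin s) 0) (Quat (cos t) 0 (sin t) 0))) in
  E p /\ kappa p = 2.
Proof.
  simpl. unfold qtr; simpl.
  pose proof (sin2_cos2 s) as Hs. pose proof (sin2_cos2 t) as Ht.
  unfold Rsqr in *.
  assert (Hk : (2 * cos s) ^ 2 + (2 * cos t) ^ 2 +
     (2 * (cos s * cos t - 0 * 0 - sin s * sin t - 0 * 0)) ^ 2 -
     2 * cos s * (2 * cos t) * (2 * (cos s * cos t - 0 * 0 - sin s * sin t - 0 * 0)) - 2 = 2).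
  { assert (E1 : sin s * sin s = 1 - cos s * cos s) by lra.
    assert (E2 : sin t * sin t = 1 - cos t * cos t) by lra.
    replace ((2 * cos s) ^ 2 + (2 * cos t) ^ 2 +
     (2 * (cos s * cos t - 0 * 0 - sin s * sin t - 0 * 0)) ^ 2 -
     2 * cos s * (2 * cos t) * (2 * (cos s * cos t - 0 * 0 - sin s * sin t - 0 * 0)) - 2)
     with (4 * cos s * cos s + 4 * cos t * cos t - 4 * (cos s * cos s) * (cos t * cos t)
           + 4 * (sin s * sin s) * (sin t * sin t) - 2) by ring.
    rewrite E1, E2. ring. }
  split; [|exact Hk].
  repeat split; try apply cos_b; try lra.
  - assert (H := cos_b (s + t)). rewrite cos_plus in H. lra.
  - assert (H := cos_b (s + t)). rewrite cos_plus in H. lra.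
Qed.

Lemma spin_bwd (x y z : R) : E (x, y, z) -> kappa (x, y, z) = 2 ->
  exists s t, x = 2 * cos s /\ y = 2 * cos t /\
    z = 2 * (cos s * cos t - sin s * sin t).
Proof.
  simpl. intros (Hx & Hy & Hz & _) Hk.
  assert (Hx' : -1 <= x / 2 <= 1) by lra.
  assert (Hy' : -1 <= y / 2 <= 1) by lra.
  set (S1 := sqrt (1 - (x / 2)²)). set (S2 := sqrt (1 - (y / 2)²)).
  assert (HS1 : S1 * S1 = 1 - (x/2)²).
  { apply sqrt_sqrt. unfold Rsqr. nra. }
  assert (HS2 : S2 * S2 = 1 - (y/2)²).
  { apply sqrt_sqrt. unfold Rsqr. nra. }
  unfold Rsqr in *.
  assert (Hw : (2 * z - x * y - 4 * S1 * S2) * (2 * z - x * y + 4 * S1 * S2) = 0).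
  { replace ((2 * z - x * y - 4 * S1 * S2) * (2 * z - x * y + 4 * S1 * S2))
      with ((2 * z - x * y) ^ 2 - 16 * (S1 * S1) * (S2 * S2)) by ring.
    rewrite HS1, HS2. nra. }
  pose proof (cos_acos _ Hx') as C1. pose proof (sin_acos _ Hx') as Sn1.
  pose proof (cos_acos _ Hy') as C2. pose proof (sin_acos _ Hy') as Sn2.
  unfold Rsqr in Sn1, Sn2. fold S1 in Sn1. fold S2 in Sn2.
  apply Rmult_integral in Hw. destruct Hw as [Hw | Hw].
  - exists (acos (x/2)), (- acos (y/2)).
    rewrite cos_neg, sin_neg, C1, C2, Sn1, Sn2. repeat split; try lra; nra.
  - exists (acos (x/2)), (acos (y/2)).
    rewrite C1, C2, Sn1, Sn2. repeat split; try lra; nra.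
Qed.

Lemma SU2_spin s : SU2 (Quat (cos s) 0 (sin s) 0).
Proof. unfold SU2; simpl. pose proof (sin2_cos2 s). unfold Rsqr in *. lra. Qed.
Lemma SU2_spinm s : SU2 (Quat 0 (sin s) 0 (cos s)).
Proof. unfold SU2; simpl. pose proof (sin2_cos2 s). unfold Rsqr in *. lra. Qed.

Lemma spin_rep (x y z : R) : E (x, y, z) -> kappa (x, y, z) = 2 ->
  GRepClass Spin2 (x, y, z).
Proof.
  intros HE Hk. destruct (spin_bwd x y z HE Hk) as (s & t & -> & -> & ->).
  exists (Quat (cos s) 0 (sin s) 0), (Quat (cos t) 0 (sin t) 0).
  split; [apply SU2_spin|]. split; [apply SU2_spin|].
  split; [exists s; reflexivity|]. split; [exists t; reflexivity|].
  unfold qtr; simpl. apply triple_eq; ring.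
Qed.

Lemma acos_half (x : R) : -2 <= x <= 2 -> cos (acos (x/2)) * 2 = x.
Proof. intros H. rewrite cos_acos; lra. Qed.

Lemma axis_rep (p : pt) : E p -> on_axis p -> GRepClass Pin2 p.
Proof.
  destruct p as [[x y] z]. simpl. intros (Hx & Hy & Hz & _) Ha.
  destruct Ha as [[-> ->] | [[-> ->] | [-> ->]]].
  - exists (Quat (cos (acos (x/2))) 0 (sin (acos (x/2))) 0), (Quat 0 (sin 0) 0 (cos 0)).
    split; [apply SU2_spin|]. split; [apply SU2_spinm|].
    split; [left; eexists; reflexivity|]. split; [right; eexists; reflexivity|].
    unfold qtr; simpl. rewrite sin_0, cos_0, cos_acos by lra.
    apply triple_eq; lra.
  - exists (Quat 0 (sin 0) 0 (cos 0)), (Quat (cos (acos (y/2))) 0 (sin (acos (y/2))) 0).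
    split; [apply SU2_spinm|]. split; [apply SU2_spin|].
    split; [right; eexists; reflexivity|]. split; [left; eexists; reflexivity|].
    unfold qtr; simpl. rewrite sin_0, cos_0, cos_acos by lra.
    apply triple_eq; lra.
  - exists (Quat 0 (sin 0) 0 (cos 0)), (Quat 0 (sin (acos (-z/2))) 0 (cos (acos (-z/2)))).
    split; [apply SU2_spinm|]. split; [apply SU2_spinm|].
    split; [right; eexists; reflexivity|]. split; [right; eexists; reflexivity|].
    unfold qtr; simpl. rewrite sin_0, cos_0, cos_acos by lra.
    apply triple_eq; lra.
Qed.

Lemma spin_class_fwd (p : pt) : GRepClass Spin2 p -> E p /\ kappa p = 2.
Proof.
  intros (a & b & _ & _ & [s ->] & [t ->] & ->). apply spin_fwd.
Qed.

Lemma part2 (p : pt) : (E p /\ GRepClass Pin2 p) <-> (Ek 2 p \/ (E p /\ on_axis p)).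
Proof.
  split.
  - intros [HE (a & b & Ha & Hb & Pa & Pb & Hp)].
    destruct Pa as [[s ->] | [s ->]]; destruct Pb as [[t ->] | [t ->]].
    + left. split; [exact HE|]. subst p. apply spin_fwd.
    + right. split; [exact HE|]. subst p. unfold on_axis, qtr; simpl. left; split; ring.
    + right. split; [exact HE|]. subst p. unfold on_axis, qtr; simpl. right; left; split; ring.
    + right. split; [exact HE|]. subst p. unfold on_axis, qtr; simpl. right; right; split; ring.
  - intros [[HE Hk] | [HE Ha]].
    + split; [exact HE|]. destruct p as [[x y] z].
      destruct (spin_rep x y z HE Hk) as (a & b & Ha & Hb & Pa & Pb & Hp).
      exists a, b. repeat split; auto; left; auto.
    + split; [exact HE|]. apply axis_rep; auto.
Qed.

Ltac nd := let HH := fresh "HH" in intro HH; simpl in HH;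
  repeat match type of HH with
  | _ \/ _ => destruct HH as [HH|HH]
  end; try contradiction; inversion HH; lra.

Theorem corollary3p2 :
  (forall p : pt, (E p /\ GRepClass Spin2 p) <-> Ek 2 p) /\
  (forall p : pt, (E p /\ GRepClass Pin2 p) <-> (Ek 2 p \/ (E p /\ on_axis p))) /\
  (forall k : R, -2 < k < 2 ->
     exists l : list pt, length l = 6%nat /\ NoDup l /\
       forall p : pt, (Ek k p /\ GRepClass Pin2 p) <-> In p l).
Proof.
  split; [|split; [exact part2|]].
  - intros p. split.
    + intros [HE H]. split; [exact HE|]. apply spin_class_fwd; exact H.
    + intros [HE Hk]. split; [exact HE|]. destruct p as [[x y] z]. apply spin_rep; auto.
  - intros k Hk.
    set (r := sqrt (k + 2)).
    assert (Hr2 : r * r = k + 2) by (apply sqrt_sqrt; lra).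
    assert (Hr0 : 0 < r) by (apply sqrt_lt_R0; lra).
    assert (Hr : r < 2) by nra.
    exists ((r,0,0) :: (-r,0,0) :: (0,r,0) :: (0,-r,0) :: (0,0,r) :: (0,0,-r) :: nil).
    split; [reflexivity|]. split.
    { repeat constructor; nd. }
    intros p. split.
    + intros [[HE Hkp] HG].
      destruct (proj1 (part2 p) (conj HE HG)) as [[_ H2] | [_ Ha]]; [lra|].
      destruct p as [[x y] z]. simpl in Hkp, Ha.
      destruct Ha as [[-> ->] | [[-> ->] | [-> ->]]].
      * assert (Hq : (x - r) * (x + r) = 0) by nra.
        apply Rmult_integral in Hq. destruct Hq as [Hq|Hq].
        -- left. apply triple_eq; lra.
        -- right; left. apply triple_eq; lra.
      * assert (Hq : (y - r) * (y + r) = 0) by nra.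
        apply Rmult_integral in Hq. destruct Hq as [Hq|Hq].
        -- do 2 right; left. apply triple_eq; lra.
        -- do 3 right; left. apply triple_eq; lra.
      * assert (Hq : (z - r) * (z + r) = 0) by nra.
        apply Rmult_integral in Hq. destruct Hq as [Hq|Hq].
        -- do 4 right; left. apply triple_eq; lra.
        -- do 5 right; left. apply triple_eq; lra.
    + intros Hin.
      assert (HEk : Ek k p /\ on_axis p).
      { simpl in Hin.
        repeat match type of Hin with
        | _ \/ _ => destruct Hin as [Hin|Hin]
        end; try contradiction; subst p; unfold Ek, E, kappa, on_axis;
        repeat split; try nra; tauto. }
      destruct HEk as [HEk Ha]. split; [exact HEk|].
      apply (proj2 (part2 p)). right. split; [apply HEk | exact Ha].
Qed.
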